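(* Let $n\ge1$, let $I\subset\mathbb R$ be an interval, $x_*\in I$, and $y\in C^{2n+1,1}(I)$ with $$y(x)=y_*+a_{2n+1}(x-x_* )^{2n+1}+a_{2n+2}(x)(x-x_* )^{2n+2}\qquad(x\in I),$$ where $y_*\in\mathbb R$, $a_{2n+1}>0$ is a constant and $a_{2n+2}:I\to\mathbb R$ is continuous. Let $$J:=\Bigl\{x\in I:\ |a_{2n+2}(x)|^{2n+1}|y(x)-y_*|<a_{2n+1}^{2n+2}R_n^{2n+1},\ \ \tfrac{(2n+2)a_{2n+2}(x)(x-x_* )}{(2n+1)a_{2n+1}}>-1\Bigr\},$$ and let $\tilde J$ be the connected component of $J$ containing $x_*$. Then for all $x\in\tilde J$, $$x-x_*=\Bigl(\tfrac{y(x)-y_*}{a_{2n+1}}\Bigr)^{\frac1{2n+1}}\sum_{j=0}^\infty\Bigl(\tfrac{-a_{2n+2}(x)}{(2n+1)a_{2n+1}}\Bigr)^jc_j^n\Bigl(\tfrac{y(x)-y_*}{a_{2n+1}}\Bigr)^{\frac j{2n+1}}.$$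
   Context: $s^{1/(2n+1)}$ is the real odd root. The sequence $(c_j^n)_{j\ge0}$ is defined recursively by $c_0^n:=1$ and $c_m^n:=\sum_{\ell_1+\dots+\ell_{2n+2}=m-1}c^n_{\ell_1}\cdots c^n_{\ell_{2n+2}}-\tfrac1{2n+1}\sum_{j_1+\dots+j_{2n+1}=m,\ 0\le j_i\le m-1}c^n_{j_1}\cdots c^n_{j_{2n+1}}$ (indices nonnegative integers). $R_n:=\frac{2n+1}{\limsup_{j\to\infty}|c_j^n|^{1/j}}$, which is positive (the power series $\bar y_n(z)=\sum_j\frac{(-1)^j}{(2n+1)^j}c_j^nz^j$ has radius of convergence $R_n>0$, and $y_0(x)=x^{1/(2n+1)}\bar y_n(x^{1/(2n+1)})$ solves $-x+y_0^{2n+1}+y_0^{2n+2}=0$). *)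

(* Defs.v *)
From Stdlib Require Import Reals Lra Lia.
From Coquelicot Require Import Coquelicot.
Open Scope R_scope.

Definition is_interval (I : R -> Prop) : Prop :=
  forall a b c, I a -> I b -> a <= c <= b -> I c.

Definition derive_within (I : R -> Prop) (f : R -> R) (x l : R) : Prop :=
  filterlim (fun h => (f h - f x) / (h - x))
    (within (fun h => I h /\ h <> x) (locally x)) (locally l).

Definition cont_on (I : R -> Prop) (f : R -> R) : Prop :=
  forall x, I x -> filterlim f (within I (locally x)) (locally (f x)).

Definition Ck1 (k : nat) (I : R -> Prop) (y : R -> R) : Prop :=
  exists d : nat -> R -> R,
    (forall x, I x -> d 0%nat x = y x) /\
    (forall j, (j < k)%nat -> forall x, I x -> derive_within I (d j) x (d (S j) x)) /\
    (exists L, forall x z, I x -> I z -> Rabs (d k x - d k z) <= L * Rabs (x - z)).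

Fixpoint sumR (N : nat) (g : nat -> R) : R :=
  match N with O => 0 | S N' => sumR N' g + g N' end.

(* comp_sum f k m b = sum over (j_1,...,j_k) in nat^k with j_1+...+j_k = m and
   0 <= j_i <= b of f j_1 * ... * f j_k  (computed by peeling off j_1). *)
Fixpoint comp_sum (f : nat -> R) (b : nat) (k m : nat) : R :=
  match k with
  | O => if Nat.eqb m 0 then 1 else 0
  | S k' => sumR (S (Nat.min m b)) (fun j => f j * comp_sum f b k' (m - j))
  end.

Fixpoint c_list (n m : nat) : list R :=
  match m with
  | O => 1 :: nil
  | S m' =>
      let prev := c_list n m' in
      let f := fun j => List.nth j prev 0 in
      prev ++ (comp_sum f m' (2 * n + 2) m'
               - / INR (2 * n + 1) * comp_sum f m' (2 * n + 1) (S m')) :: nil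
  end.

(* c^n_m : c_0 = 1, c_m = sum_{l_1+..+l_{2n+2}=m-1} prod c_{l_i}
   - 1/(2n+1) sum_{j_1+..+j_{2n+1}=m, 0<=j_i<=m-1} prod c_{j_i} *)
Definition cseq (n m : nat) : R := List.nth m (c_list n m) 0.

Definition nnroot (k : nat) (x : R) : R :=
  if Req_EM_T x 0 then 0 else Rpower x (/ INR k).

Definition oddroot (k : nat) (s : R) : R :=
  if Rlt_dec s 0 then - nnroot k (- s) else nnroot k s.

(* R_n = (2n+1) / limsup_j |c^n_j|^{1/j}, in [0, +oo] *)
Definition Rn (n : nat) : Rbar :=
  match LimSup_seq (fun j => nnroot j (Rabs (cseq n j))) with
  | Finite l => if Req_EM_T l 0 then p_infty else Finite (INR (2 * n + 1) / l)
  | p_infty => Finite 0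
  | m_infty => p_infty
  end.

Definition lt_bound (n : nat) (v a : R) : Prop :=
  match Rn n with
  | Finite r => v < a ^ (2 * n + 2) * r ^ (2 * n + 1)
  | p_infty => True
  | m_infty => False
  end.

Definition conn_comp (J : R -> Prop) (p : R) (x : R) : Prop :=
  exists K : R -> Prop, is_interval K /\ (forall z, K z -> J z) /\ K p /\ K x.

(* Main.v *)
Require Import Defs.
From Stdlib Require Import Reals.
From Coquelicot Require Import Coquelicot.
From Stdlib Require Import Lra Lia List.
Open Scope R_scope.

Fixpoint pw (a : nat -> R) (k : nat) : nat -> R :=
  match k with
  | O => fun m => if Nat.eqb m 0 then 1 else 0
  | S k' => PS_mult a (pw a k')
  end.

Lemma sumR_f : forall N g, sumR (S N) g = sum_f_R0 g N.
Proof.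
  induction N; intros g.
  - simpl. ring.
  - change (sumR (S (S N)) g) with (sumR (S N) g + g (S N)). rewrite IHN. reflexivity.
Qed.

Lemma comp_sum_ext : forall f g b, (forall j, (j <= b)%nat -> f j = g j) ->
  forall k m, comp_sum f b k m = comp_sum g b k m.
Proof.
  intros f g b H k. induction k; intros m; cbn [comp_sum]; auto.
  rewrite !sumR_f. apply sum_eq. intros i Hi. rewrite H by lia. rewrite IHk. reflexivity.
Qed.

Lemma comp_pw : forall f b k m, (m <= b)%nat -> comp_sum f b k m = pw f k m.
Proof.
  intros f b k. induction k; intros m Hm; cbn [comp_sum pw].
  - reflexivity.
  - rewrite Nat.min_l by lia. rewrite sumR_f. unfold PS_mult. apply sum_eq.
    intros i Hi. rewrite IHk by lia. reflexivity.
Qed.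

Lemma pw0 : forall a k, pw a k 0 = a O ^ k.
Proof.
  intros a k; induction k; simpl; auto.
  unfold PS_mult. simpl. rewrite IHk. ring.
Qed.

Lemma sum_except0 : forall g h N, (forall j, (1 <= j <= N)%nat -> g j = h j) ->
  sum_f_R0 g N = sum_f_R0 h N + (g 0%nat - h 0%nat).
Proof.
  intros g h N; induction N; intros H; simpl.
  - ring.
  - rewrite IHN by (intros; apply H; lia). rewrite (H (S N)) by lia. ring.
Qed.

Lemma comp_top : forall f b k, f O = 1 ->
  comp_sum f b k (S b) = pw f k (S b) - INR k * f (S b).
Proof.
  intros f b k Hf. induction k.
  - simpl. ring.
  - cbn [comp_sum]. rewrite Nat.min_r by lia. rewrite sumR_f.
    rewrite (sum_except0 _ (fun j => f j * pw f k (S b - j))).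
    2:{ intros j Hj. rewrite comp_pw by lia. reflexivity. }
    replace (S b - 0)%nat with (S b) by lia. rewrite IHk.
    cbn [pw]. unfold PS_mult at 1. rewrite tech5.
    rewrite Nat.sub_diag, pw0, Hf, pow1, S_INR. unfold PS_mult. ring.
Qed.

Lemma c_list_len : forall n m, length (c_list n m) = S m.
Proof.
  intros n m; induction m; simpl; auto.
  rewrite length_app. simpl. rewrite IHm. lia.
Qed.

Lemma c_list_prefix : forall n m j, (j <= m)%nat ->
  nth j (c_list n (S m)) 0 = nth j (c_list n m) 0.
Proof.
  intros n m j Hj. cbn [c_list]. rewrite app_nth1; auto.
  rewrite c_list_len. lia.
Qed.

Lemma c_list_nth : forall n m j, (j <= m)%nat -> nth j (c_list n m) 0 = cseq n j.
Proof.
  intros n m; induction m; intros j Hj.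
  - assert (j = 0)%nat by lia. subst. reflexivity.
  - destruct (Nat.eq_dec j (S m)). { subst. reflexivity. }
    rewrite c_list_prefix by lia. apply IHm. lia.
Qed.

Lemma cseq0 : forall n, cseq n 0 = 1.
Proof. reflexivity. Qed.

Lemma cseq_S : forall n m, cseq n (S m) =
  comp_sum (cseq n) m (2 * n + 2) m - / INR (2 * n + 1) * comp_sum (cseq n) m (2 * n + 1) (S m).
Proof.
  intros n m. unfold cseq at 1. cbn [c_list].
  rewrite app_nth2; rewrite c_list_len; [|lia].
  rewrite Nat.sub_diag. simpl nth.
  rewrite !(comp_sum_ext (fun j => nth j (c_list n m) 0) (cseq n) m) by (intros; apply c_list_nth; auto).
  reflexivity.
Qed.

Lemma pw_rec : forall n m,
  pw (cseq n) (2 * n + 1) (S m) = INR (2 * n + 1) * pw (cseq n) (2 * n + 2) m.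
Proof.
  intros n m. pose proof (cseq_S n m) as H.
  rewrite comp_pw in H by lia. rewrite comp_top in H by apply cseq0.
  assert (HK : 0 < INR (2 * n + 1)) by (apply lt_0_INR; lia).
  set (A := pw (cseq n) (2 * n + 2) m) in *.
  set (B := pw (cseq n) (2 * n + 1) (S m)) in *.
  set (c := cseq n (S m)) in *.
  replace (/ INR (2 * n + 1) * (B - INR (2 * n + 1) * c)) with (B / INR (2*n+1) - c) in H
    by (field; lra).
  assert (B / INR (2*n+1) = A) by lra.
  rewrite <- H0. field. lra.
Qed.

Lemma pow_odd_opp : forall x n, (- x) ^ (2 * n + 1) = - (x ^ (2 * n + 1)).
Proof.
  intros x n; induction n.
  - simpl. ring.
  - replace (2 * S n + 1)%nat with (S (S (2 * n + 1))) by lia.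
    rewrite <- !tech_pow_Rmult, IHn. ring.
Qed.

Lemma pow_lt_pos : forall a b k, 0 <= a < b -> (0 < k)%nat -> a ^ k < b ^ k.
Proof.
  intros a b k Hab Hk. induction k. lia.
  destruct k. simpl. lra.
  rewrite <- !(tech_pow_Rmult _ (S k)).
  assert (a ^ S k < b ^ S k) by (apply IHk; lia).
  assert (0 <= a ^ S k) by (apply pow_le; lra).
  nra.
Qed.

Lemma odd_strict : forall n a b, a < b -> a ^ (2 * n + 1) < b ^ (2 * n + 1).
Proof.
  intros n a b Hab.
  destruct (Rle_dec 0 a).
  - apply pow_lt_pos; [lra | lia].
  - destruct (Rle_dec b 0).
    + assert ((- b) ^ (2 * n + 1) < (- a) ^ (2 * n + 1)) by (apply pow_lt_pos; [lra|lia]).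
      rewrite !pow_odd_opp in H. lra.
    + assert (0 ^ (2 * n + 1) < (- a) ^ (2 * n + 1)) by (apply pow_lt_pos; [lra|lia]).
      assert (0 ^ (2 * n + 1) < b ^ (2 * n + 1)) by (apply pow_lt_pos; [lra|lia]).
      rewrite pow_odd_opp in H. rewrite pow_i in H, H0 by lia. lra.
Qed.

Lemma odd_inj : forall n a b, a ^ (2 * n + 1) = b ^ (2 * n + 1) -> a = b.
Proof.
  intros n a b H. destruct (Rtotal_order a b) as [h|[h|h]]; auto.
  - apply (odd_strict n) in h. lra.
  - apply (odd_strict n) in h. lra.
Qed.

Lemma nnroot_pow : forall k v, (0 < k)%nat -> 0 <= v -> nnroot k v ^ k = v /\ 0 <= nnroot k v.
Proof.
  intros k v Hk Hv. unfold nnroot. destruct (Req_EM_T v 0).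
  - subst. split; [apply pow_i; lia | lra].
  - assert (0 < Rpower v (/ INR k)) by (unfold Rpower; apply exp_pos).
    split; [|lra].
    rewrite <- Rpower_pow by auto. rewrite Rpower_mult.
    rewrite Rinv_l by (apply not_0_INR; lia). apply Rpower_1. lra.
Qed.

Lemma nnroot_of_pow : forall k t, (0 < k)%nat -> 0 <= t -> nnroot k (t ^ k) = t.
Proof.
  intros k t Hk Ht. unfold nnroot. destruct (Req_EM_T (t ^ k) 0).
  - destruct (Req_EM_T t 0); auto. exfalso; exact (pow_nonzero t k n e).
  - assert (t <> 0) by (intro; subst; apply n; apply pow_i; auto).
    rewrite <- Rpower_pow by lra. rewrite Rpower_mult.
    rewrite Rinv_r by (apply not_0_INR; lia). apply Rpower_1. lra.
Qed.

Lemma oddroot_pow : forall n v, oddroot (2 * n + 1) v ^ (2 * n + 1) = v.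
Proof.
  intros n v. unfold oddroot. destruct (Rlt_dec v 0).
  - rewrite pow_odd_opp. rewrite (proj1 (nnroot_pow (2*n+1) (-v) ltac:(lia) ltac:(lra))). ring.
  - apply nnroot_pow; [lia|lra].
Qed.

Lemma sum_ge_term : forall (u : nat -> R) n N, (n <= N)%nat ->
  Rabs (u n) <= sum_f_R0 (fun k => Rabs (u k)) N.
Proof.
  intros u n N; induction N; intros H.
  - assert (n = 0)%nat by lia. subst. simpl. lra.
  - simpl. destruct (Nat.eq_dec n (S N)).
    + subst. assert (0 <= sum_f_R0 (fun k => Rabs (u k)) N)
        by (apply cond_pos_sum; intros; apply Rabs_pos). lra.
    + pose proof (IHN ltac:(lia)). pose proof (Rabs_pos (u (S N))). lra.
Qed.

Lemma bounded_ev : forall (u : nat -> R) N B,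
  (forall n, (N <= n)%nat -> Rabs (u n) <= B) -> exists M, forall n, Rabs (u n) <= M.
Proof.
  intros u N B H. exists (Rabs B + sum_f_R0 (fun k => Rabs (u k)) N). intros n.
  assert (0 <= sum_f_R0 (fun k => Rabs (u k)) N)
    by (apply cond_pos_sum; intros; apply Rabs_pos).
  pose proof (Rle_abs B).
  destruct (Compare_dec.le_lt_dec N n).
  - specialize (H n l). lra.
  - pose proof (sum_ge_term u n N ltac:(lia)). pose proof (Rabs_pos B). lra.
Qed.

Lemma radius_ge : forall a r, (exists M, forall n, Rabs (a n * r ^ n) <= M) ->
  Rbar_le r (CV_radius a).
Proof.
  intros a r H. destruct (CV_radius_bounded a) as [Hub _]. apply Hub. exact H.
Qed.

Lemma ex_series_bounded : forall u : nat -> R, ex_series u -> exists M, forall n, Rabs (u n) <= M.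
Proof.
  intros u H. apply ex_series_lim_0 in H. apply is_lim_seq_Reals in H.
  destruct (H 1 Rlt_0_1) as [N HN]. apply (bounded_ev u N 1).
  intros n Hn. specialize (HN n Hn). unfold R_dist in HN. rewrite Rminus_0_r in HN. lra.
Qed.

Lemma between : forall x A B, Rbar_lt (Rabs x) A -> Rbar_lt (Rabs x) B ->
  exists r, Rabs x < r /\ Rbar_lt r A /\ Rbar_lt r B.
Proof.
  intros x A B HA HB.
  destruct A as [a| |]; destruct B as [b| |]; simpl in *; try tauto.
  - exists ((Rabs x + Rmin a b) / 2). unfold Rmin. destruct (Rle_dec a b); lra.
  - exists ((Rabs x + a) / 2). lra.
  - exists ((Rabs x + b) / 2). lra.
  - exists (Rabs x + 1). lra.
Qed.

Lemma mult_radius : forall a b x, Rbar_lt (Rabs x) (CV_radius a) ->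
  Rbar_lt (Rabs x) (CV_radius b) -> Rbar_lt (Rabs x) (CV_radius (PS_mult a b)).
Proof.
  intros a b x Ha Hb. destruct (between x _ _ Ha Hb) as [r [Hr [Hra Hrb]]].
  assert (Hr0 : Rabs r = r) by (apply Rabs_pos_eq; pose proof (Rabs_pos x); lra).
  assert (H := ex_pseries_mult a b r). rewrite Hr0 in H. specialize (H Hra Hrb).
  apply ex_pseries_R in H. apply ex_series_bounded in H.
  apply Rbar_lt_le_trans with (Finite r). simpl; auto. apply radius_ge. exact H.
Qed.

Lemma pw_radius : forall a x k, Rbar_lt (Rabs x) (CV_radius a) ->
  Rbar_lt (Rabs x) (CV_radius (pw a k)).
Proof.
  intros a x k H. induction k.
  - apply Rbar_lt_le_trans with (Finite (Rabs x + 1)). simpl; lra.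
    apply radius_ge. exists 1. intros n. destruct n; simpl.
    + rewrite Rmult_1_l, Rabs_R1. lra.
    + rewrite Rmult_0_l, Rabs_R0. lra.
  - simpl. apply mult_radius; auto.
Qed.

Lemma delta_sum : forall a x N, sum_f_R0 (fun n => pw a 0 n * x ^ n) N = 1.
Proof.
  intros a x N; induction N. simpl; ring.
  change (sum_f_R0 (fun n => pw a 0 n * x ^ n) (S N)) with
    (sum_f_R0 (fun n => pw a 0 n * x ^ n) N + pw a 0 (S N) * x ^ (S N)).
  rewrite IHN. simpl. ring.
Qed.

Lemma pw_series : forall a x k, Rbar_lt (Rabs x) (CV_radius a) ->
  is_pseries (pw a k) x (PSeries a x ^ k).
Proof.
  intros a x k H. induction k.
  - apply is_pseries_R. apply is_series_Reals. intros eps He. exists 0%nat.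
    intros n _. idtac. rewrite (delta_sum a x n). unfold R_dist. simpl. rewrite Rminus_diag, Rabs_R0. lra.
  - simpl. apply is_pseries_mult; auto.
    + apply PSeries_correct. apply CV_radius_inside. auto.
    + apply pw_radius. auto.
Qed.

Lemma C_ident : forall n w, Rbar_lt (Rabs w) (CV_radius (cseq n)) ->
  PSeries (cseq n) w ^ (2 * n + 1) = 1 + INR (2 * n + 1) * w * PSeries (cseq n) w ^ (2 * n + 2).
Proof.
  intros n w H.
  set (C := PSeries (cseq n) w).
  pose proof (pw_series (cseq n) w (2 * n + 1) H) as HK.
  pose proof (pw_series (cseq n) w (2 * n + 2) H) as HK1.
  apply is_pseries_R in HK. apply is_pseries_R in HK1. fold C in HK, HK1.
  assert (H1 : is_series (fun m => pw (cseq n) (2 * n + 1) (S m) * w ^ (S m)) (C ^ (2 * n + 1) - 1)).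
  { apply (is_series_incr_1 (fun m => pw (cseq n) (2 * n + 1) m * w ^ m)).
    rewrite pw0, cseq0, pow1, pow_O.
    match goal with |- is_series _ ?l => replace l with (C ^ (2 * n + 1))
      by (unfold plus; simpl; ring) end. exact HK. }
  apply (is_series_scal_r (INR (2 * n + 1) * w)) in HK1.
  assert (H2 : is_series (fun m => pw (cseq n) (2 * n + 1) (S m) * w ^ (S m))
                  (C ^ (2 * n + 2) * (INR (2 * n + 1) * w))).
  { assert (E : forall m, pw (cseq n) (2 * n + 2) m * w ^ m * (INR (2 * n + 1) * w) =
       pw (cseq n) (2 * n + 1) (S m) * w ^ (S m)).
    { intros m. rewrite pw_rec, <- tech_pow_Rmult. ring. }
    eapply is_series_ext; [exact E|exact HK1]. }
  apply is_series_unique in H1. apply is_series_unique in H2. rewrite H1 in H2. lra.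
Qed.

Lemma radius_from_ev : forall n w L, 0 <= L -> Rabs w * L < 1 ->
  (forall eps, 0 < eps -> exists N, forall j, (N <= j)%nat ->
      nnroot j (Rabs (cseq n j)) < L + eps) ->
  Rbar_lt (Rabs w) (CV_radius (cseq n)).
Proof.
  intros n w L HL Hw Hev.
  pose proof (Rabs_pos w) as Hw0.
  set (d := 1 - Rabs w * L).
  set (rho := Rabs w + d / (2 * (L + 1))).
  assert (Hd : 0 < d) by (unfold d; lra).
  assert (Hq : 0 < d / (2 * (L + 1))) by (apply Rdiv_lt_0_compat; lra).
  assert (Hrho : 0 < rho) by (unfold rho; lra).
  assert (HrL : rho * L < 1).
  { unfold rho. assert (d / (2 * (L + 1)) * L < d) .
    { apply Rmult_lt_reg_r with (2 * (L + 1)). lra.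
      field_simplify; [|lra]. nra. }
    unfold d in *. nra. }
  set (eps := (1 - rho * L) / rho).
  assert (He : 0 < eps) by (apply Rdiv_lt_0_compat; lra).
  assert (Hre : rho * (L + eps) = 1) by (unfold eps; field; lra).
  destruct (Hev eps He) as [N HN].
  apply Rbar_lt_le_trans with (Finite rho). simpl. unfold rho; lra.
  apply radius_ge. apply (bounded_ev _ (max N 1) 1).
  intros j Hj.
  destruct (nnroot_pow j (Rabs (cseq n j)) ltac:(lia) (Rabs_pos _)) as [E1 E2].
  rewrite Rabs_mult, <- E1, (Rabs_pos_eq (rho ^ j)) by (apply pow_le; lra).
  rewrite <- Rpow_mult_distr.
  specialize (HN j ltac:(lia)).
  rewrite <- (pow1 j). apply pow_incr. split.
  - apply Rmult_le_pos; lra.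
  - nra.
Qed.

Lemma radius_main : forall n w,
  match Defs.Rn n with
  | Finite r => INR (2 * n + 1) * Rabs w < r
  | p_infty => True
  | m_infty => False
  end -> Rbar_lt (Rabs w) (CV_radius (cseq n)).
Proof.
  intros n w H. unfold Defs.Rn in H.
  destruct (ex_LimSup_seq (fun j => nnroot j (Rabs (cseq n j)))) as [l Hl].
  rewrite (is_LimSup_seq_unique _ _ Hl) in H.
  pose proof (Rabs_pos w) as Hw0.
  assert (HK : 0 < INR (2 * n + 1)) by (apply lt_0_INR; lia).
  destruct l as [l| |].
  - destruct (Req_EM_T l 0).
    + subst. apply radius_from_ev with 0. lra. lra.
      intros eps He. destruct (Hl (mkposreal eps He)) as [_ [N HN]].
      exists N. intros j Hj. specialize (HN j Hj). simpl in HN. exact HN.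
    + assert (Hl0 : 0 < l).
      { destruct (Rtotal_order l 0) as [h|[h|h]]; try lra.
        assert (/ l < 0) by (apply Rinv_lt_0_compat; lra).
        unfold Rdiv in H. nra. }
      apply radius_from_ev with l. lra.
      { assert (INR (2 * n + 1) * Rabs w * l < INR (2 * n + 1) / l * l)
          by (apply Rmult_lt_compat_r; lra).
        replace (INR (2 * n + 1) / l * l) with (INR (2 * n + 1)) in H0 by (field; lra).
        nra. }
      intros eps He. destruct (Hl (mkposreal eps He)) as [_ [N HN]].
      exists N. intros j Hj. specialize (HN j Hj). simpl in HN. exact HN.
  - nra.
  - apply radius_from_ev with 0. lra. lra.
    intros eps He. destruct (Hl (0 + eps)) as [N HN].
    exists N. intros j Hj. apply HN. exact Hj.
Qed.

Definition Phi (n : nat) (T : R) := T ^ (2 * n + 1) + T ^ (2 * n + 2).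
Definition Tc (n : nat) := - INR (2 * n + 1) / INR (2 * n + 2).

Lemma Phi_deriv : forall n T, derivable_pt_lim (Phi n) T
   (T ^ (2 * n) * (INR (2 * n + 1) + INR (2 * n + 2) * T)).
Proof.
  intros n T.
  change (Phi n) with (plus_fct (fun y => y ^ (2 * n + 1)) (fun y => y ^ (2 * n + 2))).
  replace (T ^ (2 * n) * (INR (2 * n + 1) + INR (2 * n + 2) * T)) with
    (INR (2 * n + 1) * T ^ pred (2 * n + 1) + INR (2 * n + 2) * T ^ pred (2 * n + 2)).
  apply derivable_pt_lim_plus; apply derivable_pt_lim_pow.
  replace (pred (2 * n + 1)) with (2 * n)%nat by lia.
  replace (pred (2 * n + 2)) with (S (2 * n)) by lia.
  rewrite <- tech_pow_Rmult. ring.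
Qed.

Lemma even_nonneg : forall n T, 0 <= T ^ (2 * n).
Proof. intros. rewrite pow_mult. apply pow_le. apply pow2_ge_0. Qed.

Lemma even_pos : forall n T, T <> 0 -> 0 < T ^ (2 * n).
Proof. intros. rewrite pow_mult. apply pow_lt. apply pow2_gt_0. auto. Qed.

Lemma K_pos : forall n, 0 < INR (2 * n + 1).
Proof. intros; apply lt_0_INR; lia. Qed.
Lemma K2_pos : forall n, 0 < INR (2 * n + 2).
Proof. intros; apply lt_0_INR; lia. Qed.
Lemma K2_eq : forall n, INR (2 * n + 2) = INR (2 * n + 1) + 1.
Proof. intros. replace (2 * n + 2)%nat with (S (2 * n + 1)) by lia. apply S_INR. Qed.

Lemma Tc_mul : forall n, INR (2 * n + 2) * Tc n = - INR (2 * n + 1).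
Proof. intros. unfold Tc. field. pose proof (K2_pos n). lra. Qed.

Lemma Tc_bounds : forall n, -1 < Tc n < 0.
Proof.
  intros. pose proof (Tc_mul n). pose proof (K2_eq n). pose proof (K_pos n). nra.
Qed.

Lemma dsign_pos : forall n T, Tc n < T -> 0 < INR (2 * n + 1) + INR (2 * n + 2) * T.
Proof. intros. pose proof (Tc_mul n). pose proof (K2_pos n). nra. Qed.

Lemma dsign_neg : forall n T, T < Tc n -> INR (2 * n + 1) + INR (2 * n + 2) * T < 0.
Proof. intros. pose proof (Tc_mul n). pose proof (K2_pos n). nra. Qed.

Lemma Phi_fact : forall n T, Phi n T = T ^ (2 * n + 1) * (1 + T).
Proof.
  intros. unfold Phi. replace (2 * n + 2)%nat with (S (2 * n + 1)) by lia.
  rewrite <- tech_pow_Rmult. ring.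
Qed.

Lemma Phi_Tc_neg : forall n, Phi n (Tc n) < 0.
Proof.
  intros. rewrite Phi_fact. destruct (Tc_bounds n).
  assert (Tc n ^ (2 * n + 1) < 0 ^ (2 * n + 1)) by (apply odd_strict; lra).
  rewrite pow_i in H1 by lia. nra.
Qed.

Lemma phi_strict_aux : forall n T1 T2, Tc n < T1 -> T1 < T2 -> (0 <= T1 \/ T2 <= 0) ->
  Phi n T1 < Phi n T2.
Proof.
  intros n T1 T2 H1 H2 H3.
  destruct (MVT_cor2 (Phi n) _ T1 T2 H2 (fun c _ => Phi_deriv n c)) as [c [Hc Hc2]].
  assert (c <> 0) by lra.
  pose proof (even_pos n c H). pose proof (dsign_pos n c ltac:(lra)).
  assert (0 < c ^ (2 * n) * (INR (2 * n + 1) + INR (2 * n + 2) * c) * (T2 - T1)).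
  { apply Rmult_lt_0_compat; [apply Rmult_lt_0_compat|]; lra. }
  lra.
Qed.

Lemma phi_strict : forall n T1 T2, Tc n < T1 -> T1 < T2 -> Phi n T1 < Phi n T2.
Proof.
  intros n T1 T2 H1 H2.
  destruct (Rle_dec 0 T1). apply phi_strict_aux; auto.
  destruct (Rle_dec T2 0). apply phi_strict_aux; auto.
  pose proof (phi_strict_aux n T1 0 H1 ltac:(lra) ltac:(lra)).
  pose proof (phi_strict_aux n 0 T2 ltac:(lra) ltac:(lra) ltac:(lra)). lra.
Qed.

Lemma phi_min : forall n T, Phi n (Tc n) <= Phi n T.
Proof.
  intros n T. destruct (Rtotal_order T (Tc n)) as [h|[h|h]].
  - destruct (MVT_cor2 (Phi n) _ T (Tc n) h (fun c _ => Phi_deriv n c)) as [c [Hc Hc2]].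
    pose proof (even_nonneg n c). pose proof (dsign_neg n c ltac:(lra)).
    assert (c ^ (2 * n) * (INR (2 * n + 1) + INR (2 * n + 2) * c) <= 0) by nra.
    nra.
  - subst; lra.
  - destruct (MVT_cor2 (Phi n) _ (Tc n) T h (fun c _ => Phi_deriv n c)) as [c [Hc Hc2]].
    pose proof (even_nonneg n c). pose proof (dsign_pos n c ltac:(lra)).
    assert (0 <= c ^ (2 * n) * (INR (2 * n + 1) + INR (2 * n + 2) * c)) by nra.
    nra.
Qed.

Definition Gf n s := s * PSeries (cseq n) (- s / INR (2 * n + 1)).
Definition Dd n s := Rbar_lt (Rabs (- s / INR (2 * n + 1))) (CV_radius (cseq n)).

Lemma phiG : forall n s, Dd n s -> Phi n (Gf n s) = s ^ (2 * n + 1).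
Proof.
  intros n s H. pose proof (C_ident n _ H) as E.
  unfold Phi, Gf. rewrite !Rpow_mult_distr.
  set (C := PSeries (cseq n) (- s / INR (2 * n + 1))) in *.
  replace (2 * n + 2)%nat with (S (2 * n + 1)) in * by lia.
  rewrite <- !tech_pow_Rmult in *.
  replace (INR (2 * n + 1) * (- s / INR (2 * n + 1))) with (- s) in E
    by (field; pose proof (K_pos n); lra).
  set (X := C ^ (2 * n + 1)) in *. set (Y := s ^ (2 * n + 1)).
  assert (X + s * (C * X) = 1) by lra.
  replace (Y * X + s * Y * (C * X)) with (Y * (X + s * (C * X))) by ring.
  rewrite H0. ring.
Qed.

Lemma abs_w : forall n s, Rabs (- s / INR (2 * n + 1)) = Rabs s / INR (2 * n + 1).
Proof.
  intros. unfold Rdiv. rewrite Rabs_mult, Rabs_Ropp, Rabs_inv.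
  rewrite (Rabs_pos_eq (INR _)) by (pose proof (K_pos n); lra). reflexivity.
Qed.

Lemma Dmono : forall n s s', Dd n s -> Rabs s' <= Rabs s -> Dd n s'.
Proof.
  intros n s s' H H'. unfold Dd in *. rewrite abs_w in *.
  eapply Rbar_le_lt_trans; [|exact H]. simpl.
  pose proof (K_pos n). unfold Rdiv. apply Rmult_le_compat_r; auto.
  left; apply Rinv_0_lt_compat; auto.
Qed.

Lemma Gcont : forall n s, Dd n s -> continuity_pt (Gf n) s.
Proof.
  intros n s H. unfold Gf.
  apply (continuity_pt_mult (fun s => s) (fun s => PSeries (cseq n) (- s / INR (2 * n + 1)))).
  - apply continuity_pt_id.
  - apply (continuity_pt_comp (fun s => - s / INR (2 * n + 1)) (PSeries (cseq n))).
    + reg. apply PSeries_continuity. exact H.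
Qed.

Lemma Dopen : forall n s0, s0 < 0 -> Dd n s0 -> exists s', s' < s0 /\ Dd n s'.
Proof.
  intros n s0 Hs H. unfold Dd in H.
  destruct (between _ _ _ H H) as [r [h1 [h2 _]]].
  rewrite abs_w in h1. rewrite Rabs_left in h1 by lra.
  pose proof (K_pos n).
  exists (- INR (2 * n + 1) * r). split.
  - assert (- s0 < INR (2 * n + 1) * r).
    { apply Rmult_lt_reg_r with (/ INR (2 * n + 1)). apply Rinv_0_lt_compat; lra.
      replace (INR (2 * n + 1) * r * / INR (2 * n + 1)) with r by (field; lra). exact h1. }
    lra.
  - unfold Dd. replace (- (- INR (2 * n + 1) * r) / INR (2 * n + 1)) with r by (field; lra).
    assert (0 < r). { assert (0 <= - s0 / INR (2 * n + 1)) by (apply Rdiv_le_0_compat; lra). lra. }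
    rewrite Rabs_pos_eq by lra. exact h2.
Qed.

Lemma G0 : forall n, Gf n 0 = 0.
Proof. intros. unfold Gf. ring. Qed.

Lemma branch : forall n s, Dd n s -> Tc n < Gf n s.
Proof.
  intros n s H. destruct (Rlt_le_dec (Tc n) (Gf n s)) as [h|h]; auto. exfalso.
  pose proof (Tc_bounds n) as HT.
  assert (Hex : exists s0, Dd n s0 /\ Gf n s0 = Tc n).
  { destruct (Req_EM_T (Gf n s) (Tc n)) as [e|ne]. { exists s; auto. }
    destruct (Rtotal_order s 0) as [hs|[hs|hs]].
    - destruct (Ranalysis5.IVT_interv (fun x => Gf n x - Tc n) s 0) as [z [Hz1 Hz2]].
      + intros a Ha. apply (continuity_pt_minus (Gf n) (fun _ => Tc n)).
        * apply Gcont. apply Dmono with s; auto. rewrite !Rabs_left1; lra.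
        * apply continuity_pt_const. intros u v; reflexivity.
      + exact hs.
      + cbv beta. lra.
      + cbv beta. rewrite G0. lra.
      + exists z. split; [|cbv beta in Hz2; lra].
        apply Dmono with s; auto. rewrite !Rabs_left1; lra.
    - subst. rewrite G0 in h. lra.
    - destruct (Ranalysis5.IVT_interv (fun x => Tc n - Gf n x) 0 s) as [z [Hz1 Hz2]].
      + intros a Ha. apply (continuity_pt_minus (fun _ => Tc n) (Gf n)).
        * apply continuity_pt_const. intros u v; reflexivity.
        * apply Gcont. apply Dmono with s; auto. rewrite !Rabs_pos_eq; lra.
      + exact hs.
      + cbv beta. rewrite G0. lra.
      + cbv beta. lra.
      + exists z. split; [|cbv beta in Hz2; lra].
        apply Dmono with s; auto. rewrite !Rabs_pos_eq; lra. }
  destruct Hex as [s0 [Hd0 Hg0]].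
  pose proof (phiG n s0 Hd0) as P0. rewrite Hg0 in P0.
  pose proof (Phi_Tc_neg n).
  assert (s0 < 0).
  { destruct (Rlt_le_dec s0 0); auto. pose proof (pow_le s0 (2 * n + 1) r). lra. }
  destruct (Dopen n s0 H1 Hd0) as [s' [Hs' Hd']].
  pose proof (odd_strict n _ _ Hs').
  pose proof (phiG n s' Hd'). pose proof (phi_min n (Gf n s')). lra.
Qed.

Lemma uniq : forall n s T, Dd n s -> Tc n < T -> Phi n T = s ^ (2 * n + 1) -> T = Gf n s.
Proof.
  intros n s T H HT HP. pose proof (branch n s H). pose proof (phiG n s H).
  destruct (Rtotal_order T (Gf n s)) as [h|[h|h]]; auto.
  - pose proof (phi_strict n _ _ HT h). lra.
  - pose proof (phi_strict n _ _ H0 h). lra.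
Qed.

Theorem lemmaA2 (n : nat) (I : R -> Prop) (xs ys a1 : R) (y a2 : R -> R) :
  (1 <= n)%nat ->
  is_interval I ->
  I xs ->
  Ck1 (2 * n + 1) I y ->
  0 < a1 ->
  cont_on I a2 ->
  (forall x, I x ->
     y x = ys + a1 * (x - xs) ^ (2 * n + 1) + a2 x * (x - xs) ^ (2 * n + 2)) ->
  let J := fun x => I x /\
     lt_bound n (Rabs (a2 x) ^ (2 * n + 1) * Rabs (y x - ys)) a1 /\
     INR (2 * n + 2) * a2 x * (x - xs) / (INR (2 * n + 1) * a1) > -1 in
  forall x, conn_comp J xs x ->
    exists S : R,
      is_series (fun j => ((- a2 x) / (INR (2 * n + 1) * a1)) ^ j * cseq n j
                          * (oddroot (2 * n + 1) ((y x - ys) / a1)) ^ j) S /\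
      x - xs = oddroot (2 * n + 1) ((y x - ys) / a1) * S.
Proof.
  intros Hn HI HIxs HCk Ha1 Hcont Hy J x Hx.
  destruct Hx as [Kk [HK [HKJ [HKxs HKx]]]].
  destruct (HKJ x HKx) as [HIx [Hlt Hcond]].
  pose proof (Hy x HIx) as Hyx.
  set (t := x - xs) in *.
  set (s := oddroot (2 * n + 1) ((y x - ys) / a1)).
  set (bb := (- a2 x) / (INR (2 * n + 1) * a1)).
  set (w := bb * s).
  pose proof (K_pos n) as HKp.
  assert (Hs0 : s ^ (2 * n + 1) = (y x - ys) / a1) by (unfold s; apply oddroot_pow).
  assert (Hs : s ^ (2 * n + 1) = t ^ (2 * n + 1) + a2 x / a1 * t ^ (2 * n + 2)).
  { unfold s. rewrite oddroot_pow. rewrite Hyx. field. lra. }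
  assert (Hrad : Rbar_lt (Rabs w) (CV_radius (cseq n))).
  { apply radius_main. unfold lt_bound in Hlt.
    destruct (Defs.Rn n) as [r| |]; auto.
    set (z := Rabs (a2 x) / a1 * Rabs s).
    assert (Ez : INR (2 * n + 1) * Rabs w = z).
    { unfold z, w, bb. unfold Rdiv. rewrite !Rabs_mult, Rabs_Ropp, Rabs_inv, Rabs_mult.
      rewrite (Rabs_pos_eq (INR _)) by lra. rewrite (Rabs_pos_eq a1) by lra.
      field. lra. }
    assert (Ez2 : z ^ (2 * n + 1) * a1 ^ (2 * n + 2) = Rabs (a2 x) ^ (2 * n + 1) * Rabs (y x - ys)).
    { unfold z. unfold Rdiv. rewrite !Rpow_mult_distr, pow_inv.
      rewrite (RPow_abs s), Hs0.
      unfold Rdiv. rewrite Rabs_mult, Rabs_inv, (Rabs_pos_eq a1) by lra.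
      replace (2 * n + 2)%nat with (S (2 * n + 1)) by lia.
      rewrite <- tech_pow_Rmult. field. split. lra. apply pow_nonzero. lra. }
    rewrite Ez. destruct (Rlt_le_dec z r) as [h|h]; auto. exfalso.
    assert (r ^ (2 * n + 1) <= z ^ (2 * n + 1)).
    { destruct h. left. apply odd_strict; auto. subst; lra. }
    assert (0 < a1 ^ (2 * n + 2)) by (apply pow_lt; lra).
    nra. }
  set (C := PSeries (cseq n) w).
  exists C. split.
  { assert (HC := PSeries_correct _ _ (CV_radius_inside _ _ Hrad)).
    apply is_pseries_R in HC. fold C in HC.
    assert (E : forall j, cseq n j * w ^ j = bb ^ j * cseq n j * s ^ j).
    { intros j. unfold w. rewrite Rpow_mult_distr. ring. }
    eapply is_series_ext; [exact E|exact HC]. }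
  destruct (Req_EM_T (a2 x) 0) as [h0|h0].
  - assert (w = 0) by (unfold w, bb; rewrite h0; field; lra).
    unfold C. rewrite H, PSeries_0, cseq0.
    rewrite h0 in Hs. replace (0 / a1 * t ^ (2 * n + 2)) with 0 in Hs by (field; lra).
    rewrite Rplus_0_r in Hs. apply odd_inj in Hs. rewrite Hs. ring.
  - set (sg := a2 x / a1 * s).
    set (T := a2 x / a1 * t).
    assert (Hw : - sg / INR (2 * n + 1) = w) by (unfold sg, w, bb; field; lra).
    assert (HD : Dd n sg) by (unfold Dd; rewrite Hw; exact Hrad).
    assert (HT : Tc n < T).
    { pose proof (Tc_mul n). pose proof (K2_pos n).
      assert (INR (2 * n + 2) * T > - INR (2 * n + 1)).
      { unfold T. 
        assert (INR (2 * n + 2) * a2 x * t / (INR (2 * n + 1) * a1) * (INR (2 * n + 1)) >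
                -1 * INR (2 * n + 1)) by (apply Rmult_gt_compat_r; lra).
        replace (INR (2 * n + 2) * a2 x * t / (INR (2 * n + 1) * a1) * INR (2 * n + 1))
          with (INR (2 * n + 2) * (a2 x / a1 * t)) in H1 by (field; lra).
        lra. }
      nra. }
    assert (HP : Phi n T = sg ^ (2 * n + 1)).
    { rewrite Phi_fact. unfold T, sg. rewrite !Rpow_mult_distr. rewrite Hs.
      replace (2 * n + 2)%nat with (S (2 * n + 1)) by lia.
      rewrite <- tech_pow_Rmult. ring. }
    pose proof (uniq n sg T HD HT HP) as EU.
    unfold Gf in EU. rewrite Hw in EU. fold C in EU. unfold T, sg in EU.
    assert (a2 x / a1 <> 0) by (unfold Rdiv; apply Rmult_integral_contrapositive; split; auto;
      apply Rinv_neq_0_compat; lra).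
    apply Rmult_eq_reg_l with (a2 x / a1); auto. rewrite EU. ring.
Qed.
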